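(* Let $S$ be a signal of a mixed signaling scheme such that the set $\{w_1(j): j\in S\}$ consists of a single bidder. Then $S$ is singleton-splittable, i.e. $\sum_{j\in S}\varphi_{j,S}\,\mathrm{rev}(j)\ge\mathrm{rev}(S)$.
   Context: Setting: $n\ge 2$ bidders, $m$ item types with probabilities $p_j$, nonnegative valuations $v_{i,j}$; $\psi_{i,j}=p_jv_{i,j}$. A mixed signaling scheme is a finite signal set $\mathcal{S}$ and $\varphi:[m]\times\mathcal{S}\to[0,1]$ with $\sum_S\varphi(j,S)=1$ for each $j$; $\varphi_{j,S}=\varphi(j,S)$; $j\in S$ means $\varphi_{j,S}>0$. Ties are broken by a fixed priority order on bidders. $w_1(S)$ is the bidder maximizing $\sum_j\psi_{i,j}\varphi_{j,S}$ and $w_2(S)$ the maximizer among $i\ne w_1(S)$; $\mathrm{rev}(S)=\sum_j\varphi_{j,S}\psi_{w_2(S),j}$. For a type $j$, $w_1(j)$ is the bidder maximizing $\psi_{i,j}$ and $\mathrm{rev}(j)=\mathrm{max2}_i\psi_{i,j}$ (second-largest entry with multiplicity). *)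

(* Defs.v *)
From mathcomp Require Import all_boot all_order all_algebra.
Set Implicit Arguments. Unset Strict Implicit. Unset Printing Implicit Defensive.
Import Order.TTheory GRing.Theory Num.Theory.
Local Open Scope ring_scope.

Section Auction.
Variables (R : realFieldType) (Bidder : finType) (rank : Bidder -> nat).
(* rank = fixed priority order on bidders: smaller rank = higher priority
   (rank is assumed injective in the theorem). *)

Definition beats (f : Bidder -> R) (i k : Bidder) : bool :=
  (f k < f i) || ((f k == f i) && (rank i < rank k)%N).

Definition is_w1 (f : Bidder -> R) (i : Bidder) : Prop :=
  forall k, k != i -> beats f i k.

Definition is_w2 (f : Bidder -> R) (i : Bidder) : Prop :=
  exists2 w, is_w1 f w & (i != w /\ forall k, k != i -> k != w -> beats f i k).

(* second-largest entry of f, counted with multiplicity *)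
Definition max2 (f : Bidder -> R) : R :=
  nth 0 (sort (fun x y : R => y <= x) [seq f i | i <- enum Bidder]) 1.
End Auction.

Section Scheme.
Variables (R : realFieldType) (Bidder Item Sig : finType).
Variables (p : Item -> R) (v : Bidder -> Item -> R) (phi : Item -> Sig -> R).

Definition psi (i : Bidder) (j : Item) : R := p j * v i j.

Definition is_scheme : Prop :=
  (forall j S, 0 <= phi j S <= 1) /\ (forall j, \sum_(S : Sig) phi j S = 1).

Definition in_sig (j : Item) (S : Sig) : bool := 0 < phi j S.

(* expected value of bidder i conditioned (unnormalized) on signal S *)
Definition sig_score (S : Sig) (i : Bidder) : R := \sum_(j : Item) psi i j * phi j S.

(* revenue of S given its second-highest bidder w2 *)
Definition rev_sig_at (S : Sig) (w2 : Bidder) : R := \sum_(j : Item) phi j S * psi w2 j.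

Definition rev_item (j : Item) : R := max2 (fun i => psi i j).
End Scheme.

(* Main.v *)
Require Import Defs.
From mathcomp Require Import all_boot all_order all_algebra.
Import Order.TTheory GRing.Theory Num.Theory.
Local Open Scope ring_scope.

Lemma count_ge2 (T : finType) (a : pred T) b k : k != b -> a b -> a k ->
  (2 <= count a (enum T))%N.
Proof.
move=> kb ab ak.
have -> : count a (enum T) = #|a|.
  by rewrite cardE -size_filter; congr size; rewrite enumT /enum_mem.
have := cards2 b k; rewrite eq_sym kb => <-.
apply: subset_leq_card; apply/subsetP => x; rewrite !inE.
by case/orP=> /eqP->.
Qed.

Lemma max2_ge (R : realFieldType) (T : finType) (f : T -> R) b k :
  k != b -> (forall i, f i <= f b) -> f k <= max2 f.
Proof.
move=> kb Hb; rewrite /max2.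
set s := sort _ _.
have Hp : perm_eq s [seq f i | i <- enum T] by rewrite perm_sort.
have Hs : sorted (fun x y : R => y <= x) s.
  by apply: sort_sorted => x y; rewrite orbC le_total.
set m := nth 0 s 1.
rewrite leNgt; apply/negP => Hkm.
have Hc : (2 <= count (fun x : R => (m < x)%R) s)%N.
  rewrite ((permP Hp) (fun x : R => (m < x)%R)) count_map.
  apply: (@count_ge2 T _ b k) => //=.
  exact: lt_le_trans Hkm (Hb k).
move: Hc Hs; rewrite /m; case: (s) => [|x0 [|x1 t]] //=; first by rewrite addn0 ltnNge leq_b1.
move=> Hc /andP[_ Hpt].
have Ht : all (fun y => y <= x1) t.
  apply: (order_path_min (leT := fun x y : R => y <= x)) => //.
  by move=> x y z Hyx Hzy; exact: le_trans Hzy Hyx.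
have Ht0 : count (fun x : R => (x1 < x)%R) t = 0%N.
  apply/eqP; rewrite -leqn0 leqNgt -has_count; apply/hasPn => y /(allP Ht).
  by rewrite leNgt.
by move: Hc; rewrite ltxx add0n Ht0 addn0 ltnNge leq_b1.
Qed.

Theorem corollary1 (R : realFieldType) (Bidder Item Sig : finType)
  (rank : Bidder -> nat) (p : Item -> R) (v : Bidder -> Item -> R)
  (phi : Item -> Sig -> R) (S : Sig) :
  (2 <= #|Bidder|)%N ->
  injective rank ->
  (forall j, 0 <= p j) -> \sum_(j : Item) p j = 1 ->
  (forall i j, 0 <= v i j) ->
  is_scheme phi ->
  (* {w_1(j) : j \in S} is a single bidder b *)
  (exists b : Bidder,
      (exists j, in_sig phi j S) /\
      forall j, in_sig phi j S -> is_w1 rank (fun i => psi p v i j) b) ->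
  forall w2 : Bidder, is_w2 rank (sig_score p v phi S) w2 ->
  \sum_(j : Item | in_sig phi j S) phi j S * rev_item p v j
    >= rev_sig_at p v phi S w2.
Proof.
move=> _ _ _ _ _ [Hphi _] [b [[j0 Hj0] Hb]] w2 [w Hw [w2w Hw2]].
have Hge : forall j, in_sig phi j S -> forall i, psi p v i j <= psi p v b j.
  move=> j Hj i; case: (eqVneq i b) => [->//|ib].
  by case/orP: (Hb j Hj i ib) => [/ltW//|/andP[/eqP->]].
have w2b : w2 != b.
  apply/eqP => E; subst w2.
  have wb : b != w by [].
  have := Hw b wb; rewrite /beats.
  have Hle : sig_score p v phi S w <= sig_score p v phi S b.
    rewrite /sig_score; apply: ler_sum => j _.
    case: (boolP (in_sig phi j S)) => Hj.
      by apply: ler_wpM2r; [case/andP: (Hphi j S)|exact: Hge].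
    have -> : phi j S = 0.
      by case/andP: (Hphi j S) => H0 _; apply/eqP; rewrite eq_le H0 andbT leNgt.
    by rewrite !mulr0.
  rewrite ltNge Hle /=.
  (* equal scores: contradiction via j0 *)
  case/andP=> /eqP Heq Hr.
  have Hj0e : psi p v w j0 = psi p v b j0.
    apply/eqP; rewrite eq_le Hge //=.
    have Hd : \sum_j (psi p v b j * phi j S - psi p v w j * phi j S) = 0.
      by rewrite sumrB -/(sig_score p v phi S b) -/(sig_score p v phi S w) Heq subrr.
    have Hterms : forall j, 0 <= psi p v b j * phi j S - psi p v w j * phi j S.
      move=> j; rewrite subr_ge0.
      case: (boolP (in_sig phi j S)) => Hj.
        by apply: ler_wpM2r; [case/andP: (Hphi j S)|exact: Hge].
      have -> : phi j S = 0.
        by case/andP: (Hphi j S) => H0 _; apply/eqP; rewrite eq_le H0 andbT leNgt.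
      by rewrite !mulr0.
    have := (psumr_eq0P (fun j _ => Hterms j) Hd) j0 isT.
    move/eqP; rewrite subr_eq0 => /eqP E.
    have Hpos : 0 < phi j0 S := Hj0.
    by move: E => /(mulIf (lt0r_neq0 Hpos)) ->.
  have wb' : w != b by rewrite eq_sym.
  have := Hb j0 Hj0 w wb'; rewrite /beats Hj0e ltxx eqxx /= => Hr'.
  by move: (ltn_trans Hr Hr'); rewrite ltnn.
rewrite /rev_sig_at [X in _ <= X]big_mkcond /=; apply: ler_sum => j _.
case: (boolP (in_sig phi j S)) => Hj.
  apply: ler_wpM2l; first by case/andP: (Hphi j S).
  rewrite /rev_item; apply: (@max2_ge _ _ _ b w2 w2b) => i; exact: Hge.
have -> : phi j S = 0.
  by case/andP: (Hphi j S) => H0 _; apply/eqP; rewrite eq_le H0 andbT leNgt.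
by rewrite mul0r.
Qed.
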